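(* Let $O=\operatorname{Out}^0(A_\Gamma;\mathcal{G},\mathcal{H}^t)$ with $\mathcal{G}$ saturated with respect to $(\mathcal{G},\mathcal{H})$, let $r=\operatorname{rk}(O)$, $1\le m\le r-1$, and $P\in\mathcal{P}_m(O)$. Then $P$ is itself of the form $\operatorname{Out}^0(A_\Gamma;\mathcal{G}',\mathcal{H}'^t)$ for families $\mathcal{G}',\mathcal{H}'$ of special subgroups with $\mathcal{G}'$ saturated with respect to $(\mathcal{G}',\mathcal{H}')$, and for any such representation one has $\operatorname{rk}(P)=|V(\Gamma)|-|T_{\mathcal{G}'}|=m$.
   Context: $\Gamma$ is a finite simplicial graph with vertex set $V(\Gamma)$. Subgraphs are always full subgraphs and are identified with their vertex sets. $A_\Gamma$ is the right-angled Artin group generated by $V(\Gamma)$ with relations $[v,w]=1$ for adjacent $v,w$. For $\Delta\subseteq\Gamma$, the special subgroup $A_\Delta\le A_\Gamma$ is the subgroup generated by $\Delta$. $\operatorname{lk}(v)$ is the set of vertices adjacent to $v$ and $\operatorname{st}(v)=\operatorname{lk}(v)\cup\{v\}$. An outer automorphism $\Phi$ stabilises a subgroup $H$ if some representative $\phi\in\Phi$ satisfies $\phi(H)=H$, and acts trivially on $H$ if some representative restricts to the identity on $H$. The Laurence generators of $\operatorname{Out}(A_\Gamma)$ are the classes of: inversions $\iota_v$ ($v\mapsto v^{-1}$); transvections $\rho_v^w$ for $v\neq w$ with $\operatorname{lk}(v)\subseteq\operatorname{st}(w)$ ($v\mapsto vw$); partial conjugations $\pi_K^v$ for $K$ a union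 of connected components of $\Gamma\setminus\operatorname{st}(v)$ ($u\mapsto vuv^{-1}$ for $u\in K$); all other generators being fixed. $\operatorname{Out}^0(A_\Gamma)$ is the subgroup of $\operatorname{Out}(A_\Gamma)$ generated by these. For families $\mathcal{G},\mathcal{H}$ of special subgroups, $\operatorname{Out}^0(A_\Gamma;\mathcal{G},\mathcal{H}^t)$ is the subgroup of $\operatorname{Out}^0(A_\Gamma)$ consisting of elements stabilising every member of $\mathcal{G}$ and acting trivially on every member of $\mathcal{H}$. $\mathcal{G}$ is saturated with respect to $(\mathcal{G},\mathcal{H})$ if it contains every proper special subgroup of $A_\Gamma$ stabilised by $\operatorname{Out}^0(A_\Gamma;\mathcal{G},\mathcal{H}^t)$. The $\mathcal{G}$-ordering $\preceq$ on $V(\Gamma)$: $v\preceq w$ iff $\operatorname{lk}(v)\subseteq\operatorname{st}(w)$ and for every $A_\Delta\in\mathcal{G}$ with $v\in\Delta$ also $w\in\Delta$; $v\sim w$ iff $v\preceq w$ and $w\preceq v$; $[v]$ denotes the equivalence class and $T_\mathcal{G}$ the set of classes; $v\prec w$ iff $v\preceq w$ and not $w\preceq v$; $\Gamma_{\succ v}=\{w: v\prec w\}$. The rank is $\operatorname{rk}(O)=|V(\Gamma)|-|T_\mathcal{G}|$. Maximal standard parabolic subgroups: fix an enumeration $[v]=\{v_1,\dots,v_n\}$ of each class; for $1\le j\le n-1$ let $\Delta_v^j$ be the full subgraph on $\{v_1,\dots,v_j\}\cup\Gamma_{\succ v}$; $\mathcal{P}(O)$ is the set of all $\operatorname{Stab}_O(A_{\Delta_v^j})$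 over all classes $[v]\in T_\mathcal{G}$ and $1\le j\le |[v]|-1$. The rank-$m$ standard parabolic subgroups: $\mathcal{P}_m(O)=\{P_1\cap\dots\cap P_{r-m}: P_1,\dots,P_{r-m}\text{ distinct elements of }\mathcal{P}(O)\}$. *)

(* Defs.v *)
From Stdlib Require Import Relations.
From HB Require Import structures.
From mathcomp Require Import all_boot.
Set Implicit Arguments. Unset Strict Implicit. Unset Printing Implicit Defensive.

Section RAAG.
Variables (T : finType) (e : rel T).

(* letters: (v, true) = v, (v, false) = v^-1 *)
Definition word := seq (T * bool).
Definition inv_word (w : word) : word := rev (map (fun l => (l.1, ~~ l.2)) w).
Definition gen_word (v : T) : word := [:: (v, true)].

Inductive raag_step : word -> word -> Prop :=
| step_cancel (w1 w2 : word) (a : T) (s : bool) :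
    raag_step (w1 ++ (a, s) :: (a, ~~ s) :: w2) (w1 ++ w2)
| step_comm (w1 w2 : word) (a b : T) (s t : bool) :
    e a b -> raag_step (w1 ++ (a, s) :: (b, t) :: w2) (w1 ++ (b, t) :: (a, s) :: w2).

Definition weq : relation word := clos_refl_sym_trans word raag_step.

(* an endomorphism of A_Gamma given by the images of the generators *)
Definition endo := T -> word.
Definition apply (f : endo) (w : word) : word :=
  flatten (map (fun l => if l.2 then f l.1 else inv_word (f l.1)) w).
Definition comp (f g : endo) : endo := fun a => apply f (g a).
Definition id_endo : endo := gen_word.

Definition lk (v : T) : {set T} := [set w | e v w].
Definition st (v : T) : {set T} := v |: lk v.

(* Laurence generators (and the inverses of transvections / partial
   conjugations; bool s = false gives the inverse) *)
Definition inversion (v : T) : endo :=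
  fun u => if u == v then [:: (v, false)] else gen_word u.
Definition transvection (v w : T) (s : bool) : endo :=
  fun u => if u == v then [:: (v, true); (w, s)] else gen_word u.
Definition partial_conj (v : T) (K : {set T}) (s : bool) : endo :=
  fun u => if u \in K then [:: (v, s); (u, true); (v, ~~ s)] else gen_word u.

Inductive laurence : endo -> Prop :=
| L_inv v : laurence (inversion v)
| L_tr v w (s : bool) : v != w -> lk v \subset st w -> laurence (transvection v w s)
| L_pc v (K : {set T}) (s : bool) : K \subset ~: st v ->
    (forall a b, a \in K -> b \notin st v -> e a b -> b \in K) ->
    laurence (partial_conj v K s).

(* monoid generated by generators and their inverses = group generated *)
Inductive generated : endo -> Prop :=
| gen_id : generated id_endo
| gen_step f g : generated f -> laurence g -> generated (comp f g).

Definition out_eq (f g : endo) : Prop :=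
  exists c : word, forall a, weq (f a) (c ++ g a ++ inv_word c).

Definition inOut0 (f : endo) : Prop := exists g, generated g /\ out_eq f g.

Definition inSpecial (D : {set T}) (x : word) : Prop :=
  exists w : word, all (fun l => l.1 \in D) w /\ weq x w.
Definition inImage (f : endo) (D : {set T}) (x : word) : Prop :=
  exists w : word, all (fun l => l.1 \in D) w /\ weq x (apply f w).

Definition stabilises (f : endo) (D : {set T}) : Prop :=
  exists g, out_eq f g /\ forall x, inImage g D x <-> inSpecial D x.
Definition acts_trivially (f : endo) (D : {set T}) : Prop :=
  exists g, out_eq f g /\ forall a, a \in D -> weq (g a) (gen_word a).

(* Out^0(A_Gamma; G, H^t); families of special subgroups given by vertex sets *)
Definition OutGH (G H : {set {set T}}) (f : endo) : Prop :=
  inOut0 f /\ (forall D, D \in G -> stabilises f D)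
          /\ (forall D, D \in H -> acts_trivially f D).

Definition saturated (G H : {set {set T}}) : Prop :=
  forall D : {set T}, D != setT ->
    (forall f, OutGH G H f -> stabilises f D) -> D \in G.

Definition preceq (G : {set {set T}}) (v w : T) : bool :=
  (lk v \subset st w) && [forall D in G, (v \in D) ==> (w \in D)].
Definition prec G v w := preceq G v w && ~~ preceq G w v.
Definition cls G v : {set T} := [set w | preceq G v w && preceq G w v].
Definition nclasses G := #|[set cls G v | v : T]|.
Definition rk G := #|T| - nclasses G.

(* sigma : an injective numbering of vertices, inducing the enumeration
   of each equivalence class *)
Definition Delta G (sigma : T -> nat) (v : T) (j : nat) : {set T} :=
  [set u | (u \in cls G v) &&
           (#|[set u' in cls G v | sigma u' <= sigma u]| <= j)]
  :|: [set w | prec G v w].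

Definition StabO G H (D : {set T}) (f : endo) : Prop := OutGH G H f /\ stabilises f D.

Definition valid_index G (p : T * nat) : bool :=
  (1 <= p.2) && (p.2 <= #|cls G p.1| - 1).

Definition in_Pm G H (sigma : T -> nat) (m : nat) (P : endo -> Prop) : Prop :=
  exists L : seq (T * nat),
    size L = rk G - m /\ all (valid_index G) L /\
    (forall (d : T * nat) i j, i < size L -> j < size L -> i != j ->
       ~ (forall f, StabO G H (Delta G sigma (nth d L i).1 (nth d L i).2) f
               <-> StabO G H (Delta G sigma (nth d L j).1 (nth d L j).2) f)) /\
    (forall f, P f <-> (forall p, p \in L -> StabO G H (Delta G sigma p.1 p.2) f)).

End RAAG.

(* Main.v *)
From Stdlib Require Import Relations.
Require Import Defs.
From mathcomp Require Import all_boot zify.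
From Stdlib Require Import ClassicalEpsilon.
Set Implicit Arguments. Unset Strict Implicit.


Section W.
Variables (T : finType) (e : rel T).
Hypothesis esym : symmetric e.
Implicit Types (f g : endo T) (x y p q : word T) (v : T) (l : T * bool).
Local Notation W := (Defs.weq e).

Lemma weq_refl x : W x x. Proof. exact: rst_refl. Qed.
Lemma weq_sym x y : W x y -> W y x. Proof. exact: rst_sym. Qed.
Lemma weq_trans x y z : W x y -> W y z -> W x z. Proof. exact: rst_trans. Qed.

Lemma step_ctx p q x y : raag_step e x y -> raag_step e (p ++ x ++ q) (p ++ y ++ q).
Proof.
case=> [w1 w2 a s|w1 w2 a b s t eab].
- rewrite -!catA /= catA [X in raag_step _ _ X]catA; exact: step_cancel.
- rewrite -!catA /= catA [X in raag_step _ _ X]catA; exact: step_comm.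
Qed.

Lemma weq_ctx p q x y : W x y -> W (p ++ x ++ q) (p ++ y ++ q).
Proof.
elim=> [a b st|a|a b _ IH|a b c _ IH1 _ IH2].
- apply: rst_step; exact: step_ctx.
- exact: rst_refl.
- exact: rst_sym.
- exact: rst_trans IH2.
Qed.

Lemma weq_cat x x' y y' : W x x' -> W y y' -> W (x ++ y) (x' ++ y').
Proof.
move=> h1 h2; apply: (@weq_trans _ (x' ++ y)).
  by have := weq_ctx [::] y h1; rewrite /=.
by have := weq_ctx x' [::] h2; rewrite !cats0.
Qed.

Lemma inv_cat (x y : word T) : inv_word (x ++ y) = inv_word y ++ inv_word x.
Proof. by rewrite /inv_word map_cat rev_cat. Qed.

Lemma inv_invK (x : word T) : inv_word (inv_word x) = x.
Proof.
rewrite /inv_word map_rev revK -map_comp; elim: x => //= [[a s] x ->] /=.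
by rewrite negbK.
Qed.

Lemma step_inv x y : raag_step e x y -> raag_step e (inv_word x) (inv_word y).
Proof.
case=> [w1 w2 a s|w1 w2 a b s t eab].
- rewrite !inv_cat /=. rewrite /inv_word /= !rev_cons -!cats1 -!catA /=.
  have := @step_cancel T e (rev [seq (l.1, ~~ l.2) | l <- w2]) (rev [seq (l.1, ~~ l.2) | l <- w1]) a (~~ ~~ s).
  by rewrite negbK.
- rewrite !inv_cat /inv_word /= !rev_cons -!cats1 -!catA /=.
  apply: step_comm; by rewrite esym.
Qed.

Lemma weq_inv x y : W x y -> W (inv_word x) (inv_word y).
Proof.
elim=> [a b st|a|a b _ IH|a b c _ IH1 _ IH2].
- apply: rst_step; exact: step_inv.
- exact: rst_refl.
- exact: rst_sym.
- exact: rst_trans IH2.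
Qed.

Definition img (f : endo T) (l : T * bool) := if l.2 then f l.1 else inv_word (f l.1).

Lemma apply_cons f l x : apply f (l :: x) = img f l ++ apply f x.
Proof. by []. Qed.

Lemma apply_cat f x y : apply f (x ++ y) = apply f x ++ apply f y.
Proof. by rewrite /apply map_cat flatten_cat. Qed.

Lemma apply_inv f x : apply f (inv_word x) = inv_word (apply f x).
Proof.
elim: x => [|[a s] x IH] //.
rewrite apply_cons inv_cat -IH.
have -> : inv_word ((a, s) :: x) = inv_word x ++ [:: (a, ~~ s)].
  by rewrite /inv_word /= rev_cons cats1.
rewrite apply_cat /apply /= cats0 /img /=; case: s => //=; by rewrite inv_invK.
Qed.

Lemma apply_comp f g x : apply f (apply g x) = apply (Defs.comp f g) x.
Proof.
elim: x => [|[a s] x IH] //.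
by rewrite !apply_cons apply_cat IH /img /=; case: s => //=; rewrite apply_inv.
Qed.

Lemma apply_id x : apply (@id_endo T) x = x.
Proof. elim: x => [|[a s] x IH] //; rewrite apply_cons IH; by case: s. Qed.

Lemma apply_weq_pt (D : {set T}) f g x :
  (forall a, a \in D -> W (f a) (g a)) -> all (fun l => l.1 \in D) x ->
  W (apply f x) (apply g x).
Proof.
move=> H; elim: x => [|[a s] x IH] /=; first by move=> _; exact: weq_refl.
move=> /andP [aD xD]; rewrite !apply_cons; apply: weq_cat (IH xD).
rewrite /img /=; case: s; [exact: H|apply: weq_inv; exact: H].
Qed.

Definition cnt (v : T) (x : word T) := count (fun l => l.1 == v) x.

Lemma cnt_cat v x y : cnt v (x ++ y) = cnt v x + cnt v y.
Proof. exact: count_cat. Qed.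
Lemma cnt_inv v x : cnt v (inv_word x) = cnt v x.
Proof. by rewrite /cnt /inv_word count_rev count_map. Qed.

Lemma weq_cnt v x y : W x y -> odd (cnt v x) = odd (cnt v y).
Proof.
elim=> [a b st|a|a b _ IH|a b c _ IH1 _ IH2] //; last by rewrite IH1.
case: st => [w1 w2 a' s|w1 w2 a' b' s t _]; rewrite !cnt_cat /cnt /=.
- case: (a' == v) => /=; [by rewrite !oddD /= negbK | by rewrite !add0n].
- congr (odd (_ + _)); exact: addnCA.
Qed.


Lemma all_inv (P : pred T) x : all (fun l => P l.1) (inv_word x) = all (fun l => P l.1) x.
Proof. by rewrite /inv_word all_rev all_map. Qed.

Lemma apply_weq_all f g x : (forall a, W (f a) (g a)) -> W (apply f x) (apply g x).
Proof.
move=> H; apply: (@apply_weq_pt [set: T]); first by move=> a _; exact: H.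
by apply/allP => l _; rewrite in_setT.
Qed.

Lemma count0 (P : pred T) (D : {set T}) x :
  (forall a, a \in D -> ~~ P a) -> all (fun l => l.1 \in D) x -> count (fun l => P l.1) x = 0.
Proof.
move=> H; elim: x => [|l x IH] //= /andP [lD xD]; by rewrite (negbTE (H _ lD)) IH.
Qed.

Section Tr.
Variables (u w : T).
Hypothesis uw : u != w.
Notation tr := (transvection u w true).
Notation tr' := (transvection u w false).

Lemma tr_all (s : bool) (D : {set T}) x : (u \in D -> w \in D) ->
  all (fun l => l.1 \in D) x -> all (fun l => l.1 \in D) (apply (transvection u w s) x).
Proof.
move=> uD; elim: x => [|[a b] x IH] //= /andP [aD xD].
rewrite apply_cons all_cat IH // andbT.
have H0 : all (fun l => l.1 \in D) (transvection u w s a).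
  rewrite /transvection; case: eqP => [Ea|] /=; last by rewrite aD.
  by subst a; rewrite aD uD.
by rewrite /img /=; case: b => //; rewrite all_inv.
Qed.

Lemma comp_tr a : W (Defs.comp tr tr' a) (gen_word a).
Proof.
rewrite /Defs.comp /transvection; case: eqP => [->|na] /=.
- have wu : (w == u) = false by rewrite eq_sym (negbTE uw).
  rewrite /apply /img /= eqxx wu /= /gen_word.
  apply: rst_step; have := @step_cancel T e [:: (u, true)] [::] w true; by [].
- rewrite /apply /img /=; case: eqP => // _; exact: weq_refl.
Qed.

Lemma out_eq_refl f : out_eq e f f.
Proof. exists [::] => a; rewrite /= cats0; exact: weq_refl. Qed.

Lemma stab_tr (D : {set T}) : (u \in D -> w \in D) -> stabilises e tr D.
Proof.
move=> uD; exists tr; split; first exact: out_eq_refl.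
move=> x; split.
- case=> w0 [Hall Hx]; exists (apply tr w0); split => //; exact: tr_all.
- case=> w1 [Hall Hx]; exists (apply tr' w1); split; first exact: tr_all.
  apply: weq_trans Hx _; rewrite apply_comp.
  rewrite -{1}(apply_id w1); apply: weq_sym; apply: apply_weq_all; exact: comp_tr.
Qed.

Lemma acts_tr (D : {set T}) : u \notin D -> acts_trivially e tr D.
Proof.
move=> uD; exists tr; split; first exact: out_eq_refl.
move=> a aD; rewrite /transvection; case: eqP => [Ea|_]; last exact: weq_refl.
by subst a; rewrite aD in uD.
Qed.

Lemma inOut0_tr : lk e u \subset st e w -> inOut0 e tr.
Proof.
move=> lkH; exists (Defs.comp (@id_endo T) tr); split.
  apply: gen_step; [exact: gen_id | exact: L_tr].
exists [::] => a; rewrite /= cats0 /Defs.comp apply_id; exact: weq_refl.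
Qed.

Lemma nostab_tr (D : {set T}) : u \in D -> w \notin D -> ~ stabilises e tr D.
Proof.
move=> uD wD [g [[c Hc] Hg]].
have [w' [Hall Hw']] : inSpecial e D (g u).
  apply/Hg; exists [:: (u, true)]; rewrite /= uD; split => //.
  rewrite /apply /img /= cats0; exact: weq_refl.
have h1 := weq_cnt w (Hc u).
have h2 := weq_cnt w Hw'.
move: h1; rewrite !cnt_cat cnt_inv oddD [odd (_ + _)]oddD h2.
rewrite /cnt (@count0 (pred1 w) D w'); last by [].
  rewrite /cnt /transvection eqxx /= eqxx /= (negbTE uw) /=.
  by case: (odd _).
by move=> a aD; apply/eqP => Ea; subst a; rewrite aD in wD.
Qed.
End Tr.

Lemma acts_stab (D D' : {set T}) f : D' \subset D -> acts_trivially e f D -> stabilises e f D'.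
Proof.
move=> sub [g [Hfg Hg]]; exists g; split => // x; split.
- case=> w0 [Hall Hx]; exists w0; split => //; apply: weq_trans Hx _.
  rewrite -{2}(apply_id w0); apply: (@apply_weq_pt D') => // a aD.
  apply: Hg; exact: (subsetP sub).
- case=> w1 [Hall Hx]; exists w1; split => //; apply: weq_trans Hx _.
  rewrite -{1}(apply_id w1); apply: weq_sym; apply: (@apply_weq_pt D') => // a aD.
  apply: Hg; exact: (subsetP sub).
Qed.

End W.


Section C.
Variables (T : finType) (e : rel T).
Hypothesis esym : symmetric e.
Implicit Types (F G : {set {set T}}) (D : {set T}) (u v w x y z : T).

Lemma preceq_refl F v : preceq e F v v.
Proof.
rewrite /preceq; apply/andP; split.
  by apply/subsetP => x xl; rewrite /st in_setU1 xl orbT.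
by apply/forall_inP => D _; apply/implyP.
Qed.

Lemma preceq_trans F u v w : preceq e F u v -> preceq e F v w -> preceq e F u w.
Proof.
move=> /andP [l1 f1] /andP [l2 f2]; apply/andP; split.
- apply/subsetP => x xu; have := subsetP l1 x xu; rewrite /st in_setU1.
  case/orP => [/eqP Ex|xv].
  + subst x. move: xu; rewrite /lk inE => uv.
    have := subsetP l2 u; rewrite /lk inE esym => /(_ uv); rewrite /st !in_setU1 !inE.
    case/orP => [/eqP Euw|wu].
    * by subst w; rewrite uv orbT.
    * have := subsetP l1 w; rewrite /lk inE esym => /(_ wu); rewrite /st in_setU1 inE.
      case/orP => [/eqP ->|]; first by rewrite eqxx.
      by rewrite esym => ->; rewrite orbT.
  + by have := subsetP l2 x xv.
- apply/forall_inP => D DF; apply/implyP => uD.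
  have := forall_inP f1 D DF; move/implyP => /(_ uD) vD.
  by have := forall_inP f2 D DF; move/implyP => /(_ vD).
Qed.

Lemma cls_refl F v : v \in cls e F v.
Proof. by rewrite inE preceq_refl. Qed.

Lemma cls_sym F u v : u \in cls e F v -> v \in cls e F u.
Proof. by rewrite !inE andbC. Qed.

Lemma cls_eq F u v : u \in cls e F v -> cls e F u = cls e F v.
Proof.
rewrite inE => /andP [vu uv]; apply/setP => x; rewrite !inE.
apply/andP/andP => [[ux xu]|[vx xv]]; split.
- exact: preceq_trans vu ux.
- exact: preceq_trans xu uv.
- exact: preceq_trans uv vx.
- exact: preceq_trans xv vu.
Qed.

Lemma cls_trans F x y z : y \in cls e F x -> z \in cls e F y -> z \in cls e F x.
Proof. by move=> yx; rewrite (cls_eq yx). Qed.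

Lemma preceqU D F v u :
  preceq e (D |: F) v u = preceq e F v u && ((v \in D) ==> (u \in D)).
Proof.
rewrite /preceq -andbA; congr (_ && _).
apply/forall_inP/andP => [H|[H1 H2] D']; first split.
- by apply/forall_inP => D' D'F; apply: H; rewrite in_setU1 D'F orbT.
- by apply: H; rewrite in_setU1 eqxx.
- by rewrite in_setU1 => /orP [/eqP ->|]; [| exact: (forall_inP H1)].
Qed.

Lemma clsU D F v :
  cls e (D |: F) v = cls e F v :&: [set u | (u \in D) == (v \in D)].
Proof.
apply/setP => u; rewrite !inE !preceqU.
case: (u \in D); case: (v \in D); by rewrite /= ?andbT ?andbF.
Qed.

Definition nclassesT F := #|[set cls e F v | v : T]|.

Lemma split_count D F a b :
  b \in cls e F a -> a \in D -> b \notin D ->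
  (forall x y z, y \in cls e F x -> z \in cls e F x -> y \in D -> z \notin D ->
     cls e F x = cls e F a) ->
  nclasses e (D |: F) = (nclasses e F).+1.
Proof.
move=> ba aD bD Huniq.
set C0 := cls e F a.
set P1 := C0 :&: D. set P2 := C0 :&: ~: D.
have notsplit : forall v, cls e F v != C0 -> forall u, u \in cls e F v -> (u \in D) = (v \in D).
  move=> v nv u uv; apply/idP/idP => H.
  - apply/negPn/negP => vD; move/eqP: nv; apply; apply: (Huniq v u v) => //; exact: cls_refl.
  - apply/negPn/negP => uD; move/eqP: nv; apply; apply: (Huniq v v u) => //; exact: cls_refl.
have E : [set cls e (D |: F) v | v : T] = ([set cls e F v | v : T] :\ C0) :|: [set P1; P2].
  apply/setP => X; apply/imsetP/idP.
  - case=> v _ ->; rewrite clsU.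
    have [Ev|nv] := eqVneq (cls e F v) C0.
    + rewrite Ev; apply/setUP; right.
      have vC : v \in C0 by rewrite -Ev cls_refl.
      case vD: (v \in D); rewrite !inE; apply/orP; [left|right]; apply/eqP/setP => u;
        rewrite !inE; by case: (u \in C0); case: (u \in D).
    + have -> : cls e F v :&: [set u | (u \in D) == (v \in D)] = cls e F v.
        apply/setP => u; rewrite in_setI; case uv: (u \in cls e F v) => //=.
        by rewrite inE (notsplit v nv u uv) eqxx.
      by rewrite !inE nv /=; apply/orP; left; apply/imsetP; exists v.
  - rewrite !inE => /orP [/andP [nX /imsetP [v _ EX]]|/orP [/eqP EX|/eqP EX]].
    + subst X; exists v => //; rewrite clsU.
      apply/setP => u; rewrite in_setI; case uv: (u \in cls e F v) => //=.
      by rewrite inE (notsplit v nX u uv) eqxx.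
    + exists a => //; rewrite clsU EX; apply/setP => u; rewrite !inE aD.
      by case: (u \in D); rewrite ?andbT ?andbF.
    + exists b => //; rewrite clsU EX (cls_eq ba); apply/setP => u; rewrite !inE (negbTE bD).
      by case: (u \in D); rewrite ?andbT ?andbF.
have C0in : C0 \in [set cls e F v | v : T] by apply/imsetP; exists a.
have aP1 : a \in P1 by rewrite in_setI cls_refl aD.
have aP2 : a \notin P2 by rewrite in_setI in_setC aD andbF.
have bP2 : b \in P2 by rewrite in_setI in_setC ba bD.
rewrite /nclasses E cardsU.
have -> : ([set cls e F v | v : T] :\ C0) :&: [set P1; P2] = set0.
  apply/setP => X; rewrite !inE; apply/negP => /andP [/andP [nX /imsetP [v _ EX]] /orP H].
  subst X; move/eqP: nX; apply.
  case: H => /eqP H.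
  - have : a \in cls e F v by rewrite H; exact: aP1.
    by move/cls_eq => <-.
  - have : b \in cls e F v by rewrite H; exact: bP2.
    by move/cls_eq => <-; rewrite (cls_eq ba).
rewrite cards0 subn0 cards2.
have -> : (P1 != P2) by apply/eqP => E12; move: aP2; rewrite -E12 aP1.
by rewrite (cardsD1 C0 [set cls e F v | v : T]) C0in add1n addn2.
Qed.

End C.


Section D.
Variables (T : finType) (e : rel T).
Hypothesis esym : symmetric e.
Variables (G : {set {set T}}) (sigma : T -> nat).
Hypothesis sinj : injective sigma.
Local Notation ctr := (@cls_trans _ _ esym _ _ _ _).
Local Notation ceq := (@cls_eq _ _ esym _ _ _).
Implicit Types (D : {set T}) (u v w x y z : T).

Definition rnk v u := #|[set u' in cls e G v | sigma u' <= sigma u]|.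

Lemma Delta_mem v j u : (u \in Delta e G sigma v j) =
  ((u \in cls e G v) && (rnk v u <= j)) || prec e G v u.
Proof. by rewrite /Delta in_setU !inE. Qed.

Lemma prec_cls v u : u \in cls e G v -> prec e G v u = false.
Proof. by rewrite inE /prec => /andP [_ ->]; rewrite andbF. Qed.

Lemma prec_same x y v : y \in cls e G x -> prec e G v x = prec e G v y.
Proof.
rewrite inE => /andP [xy yx]; rewrite /prec.
apply/andP/andP => [[h1 h2]|[h1 h2]]; split.
- exact: (preceq_trans esym h1 xy).
- by apply/negP => h; move/negP: h2; apply; apply: (preceq_trans esym xy h).
- exact: (preceq_trans esym h1 yx).
- by apply/negP => h; move/negP: h2; apply; apply: (preceq_trans esym yx h).
Qed.

Lemma prec_ext v v' w : v' \in cls e G v -> prec e G v' w = prec e G v w.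
Proof.
rewrite inE => /andP [vv' v'v]; rewrite /prec.
apply/andP/andP => [[h1 h2]|[h1 h2]]; split.
- exact: (preceq_trans esym vv' h1).
- by apply/negP => h; move/negP: h2; apply; apply: (preceq_trans esym h vv').
- exact: (preceq_trans esym v'v h1).
- by apply/negP => h; move/negP: h2; apply; apply: (preceq_trans esym h v'v).
Qed.

Lemma Delta_ext v v' j : v' \in cls e G v -> Delta e G sigma v' j = Delta e G sigma v j.
Proof.
move=> vv; apply/setP => u; rewrite !Delta_mem /rnk (ceq vv) (prec_ext _ vv) //.
Qed.

Lemma factX v j x y : y \in cls e G x -> x \notin cls e G v ->
  (x \in Delta e G sigma v j) = (y \in Delta e G sigma v j).
Proof.
move=> yx xv; have yv : y \notin cls e G v.
  apply/negP => yv; move/negP: xv; apply; apply: ctr yv _; exact: cls_sym.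
by rewrite !Delta_mem (negbTE xv) (negbTE yv) /= (prec_same v yx).
Qed.

Lemma Delta_in v p j u : p \in cls e G v -> u \in cls e G v ->
  (u \in Delta e G sigma p j) = (rnk v u <= j).
Proof.
by move=> pv uv; rewrite (Delta_ext j pv) Delta_mem uv prec_cls //= orbF.
Qed.

Lemma rnk_ge1 v u : u \in cls e G v -> 0 < rnk v u.
Proof. move=> uv; apply/card_gt0P; exists u; by rewrite inE uv leqnn. Qed.

Lemma rnk_le v u : rnk v u <= #|cls e G v|.
Proof. apply: subset_leq_card; apply/subsetP => x; rewrite inE => /andP []. done. Qed.

Lemma rnk_lt v u u' : u \in cls e G v -> u' \in cls e G v -> sigma u < sigma u' ->
  rnk v u < rnk v u'.
Proof.
move=> uv u'v lt; apply: proper_card; apply/properP; split.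
  apply/subsetP => x; rewrite !inE => /andP [-> h] /=; exact: leq_trans h (ltnW lt).
exists u'; first by rewrite in_set u'v leqnn.
by rewrite in_set u'v /= -ltnNge.
Qed.

Lemma rnk_inj v u u' : u \in cls e G v -> u' \in cls e G v -> rnk v u = rnk v u' -> u = u'.
Proof.
move=> uv u'v E; case: (ltngtP (sigma u) (sigma u')) => [lt|lt|eq].
- by have := rnk_lt uv u'v lt; rewrite E ltnn.
- by have := rnk_lt u'v uv lt; rewrite E ltnn.
- exact: sinj.
Qed.

Lemma rnk_surj v k : 0 < k <= #|cls e G v| -> exists2 u, u \in cls e G v & rnk v u = k.
Proof.
move=> /andP [k1 kn].
set s := map (rnk v) (enum (cls e G v)).
have us : uniq s.
  rewrite map_inj_in_uniq ?enum_uniq // => a b; rewrite !mem_enum; exact: rnk_inj.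
have sub : {subset s <= iota 1 #|cls e G v|}.
  move=> x /mapP [u]; rewrite mem_enum => uv ->; rewrite mem_iota add1n ltnS rnk_le andbT.
  exact: rnk_ge1.
have sz : size (iota 1 #|cls e G v|) <= size s by rewrite size_iota size_map -cardE.
have [_ E] := uniq_min_size us sub sz.
have : k \in s by rewrite E mem_iota add1n ltnS k1 kn.
by case/mapP => u; rewrite mem_enum => uv ->; exists u.
Qed.

Definition Df (p : T * nat) := Delta e G sigma p.1 p.2.
Definition GL (L : seq (T * nat)) := foldr (fun p F => Df p |: F) G L.

Lemma clsGL L x u : (u \in cls e (GL L) x) =
  (u \in cls e G x) && all (fun p => (u \in Df p) == (x \in Df p)) L.
Proof.
elim: L => [|p L IH] /=; first by rewrite andbT.
rewrite clsU in_setI IH inE; by case: (u \in cls e G x); case: (_ == _); case: all.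
Qed.

Lemma count_GL L : all (valid_index e G) L -> uniq (map Df L) ->
  nclasses e (GL L) = nclasses e G + size L.
Proof.
elim: L => [|p L IH] /=; first by rewrite addn0.
move=> /andP [vp vL] /andP [pnL uL]; rewrite addnS -IH //.
case: p vp pnL => v j; rewrite /valid_index /= => /andP [j1 jn] pnL.
have jn' : j.+1 <= #|cls e G v| by move: jn j1; lia.
have [a aC ra] : exists2 a, a \in cls e G v & rnk v a = j.
  apply: rnk_surj; rewrite j1 /=; exact: ltnW.
have [b bC rb] : exists2 b, b \in cls e G v & rnk v b = j.+1.
  by apply: rnk_surj; rewrite jn'.
have key : forall p', p' \in L -> p'.1 \in cls e G v -> p'.2 != j.
  move=> p' p'L p'v; apply/eqP => Ej; move/negP: pnL; apply; apply/mapP; exists p' => //.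
  by rewrite /Df /= -Ej (Delta_ext _ p'v).
apply: (@split_count _ _ esym _ _ a b).
- have ba : b \in cls e G a by apply: ctr (cls_sym aC) bC.
  rewrite clsGL; apply/andP; split; first exact: ba.
  apply/allP => p' p'L; case: (boolP (a \in cls e G p'.1)) => ap.
  + have p'v : p'.1 \in cls e G v by apply: ctr aC (cls_sym ap).
    rewrite /Df (Delta_in _ p'v bC) (Delta_in _ p'v aC) ra rb.
    have := key p' p'L p'v; case: ltngtP => //.
  + by rewrite /Df (factX p'.2 ba ap).
- by rewrite /Df /= Delta_mem aC ra leqnn.
- by rewrite /Df /= Delta_mem bC rb ltnn prec_cls.
- move=> x y z; rewrite !clsGL => /andP [yx ally] /andP [zx allz] yD zD.
  have zy : z \in cls e G y by apply: ctr (cls_sym yx) zx.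
  have yv : y \in cls e G v.
    apply/negPn/negP => nyv; move: zD; rewrite /Df /= -(factX _ zy nyv) yD //.
  have zv : z \in cls e G v by apply: ctr yv zy.
  have xv : x \in cls e G v by apply: ctr yv (cls_sym yx).
  have ry : rnk v y <= j by move: yD; rewrite /Df /= Delta_mem yv prec_cls //= orbF.
  have rz : j < rnk v z by move: zD; rewrite /Df /= Delta_mem zv prec_cls //= orbF ltnNge.
  apply: ceq; rewrite clsGL; apply/andP; split.
    exact: ctr (cls_sym aC) xv.
  apply/allP => p' p'L.
  have /eqP hy := allP ally p' p'L; have /eqP hz := allP allz p' p'L.
  case: (boolP (a \in cls e G p'.1)) => ap.
  + have p'v : p'.1 \in cls e G v by apply: ctr aC (cls_sym ap).
    rewrite -hy /Df (Delta_in _ p'v aC) (Delta_in _ p'v yv) ra.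
    move: hz; rewrite -hy /Df (Delta_in _ p'v yv) (Delta_in _ p'v zv) => Eyz.
    apply/eqP; case: (leqP (rnk v y) p'.2) => hyp.
    * move: Eyz; rewrite hyp => rzp; apply: Logic.eq_sym; apply: ltnW; apply: leq_trans rz _.
      by rewrite rzp.
    * apply: Logic.eq_sym; apply/negbTE; rewrite -ltnNge; exact: leq_trans hyp ry.
  + have ax : x \in cls e G a by apply: ctr (cls_sym aC) xv.
    by rewrite /Df (factX p'.2 ax ap).
Qed.
End D.


Lemma memGL (T : finType) (e : rel T) (G : {set {set T}}) (sigma : T -> nat) (L : seq (T * nat)) (D : {set T}) :
  D \in GL e G sigma L -> D \in G \/ exists2 p, p \in L & D = Df e G sigma p.
Proof.
elim: L => [|p L IH] /=; first by left.
rewrite in_setU1 => /orP [/eqP ->|/IH [h|[p' p'L ->]]].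
- by right; exists p => //; rewrite inE eqxx.
- by left.
- by right; exists p' => //; rewrite inE p'L orbT.
Qed.

Lemma GL_G (T : finType) (e : rel T) (G : {set {set T}}) (sigma : T -> nat) (L : seq (T * nat)) (D : {set T}) : D \in G -> D \in GL e G sigma L.
Proof. by elim: L => //= p L IH DG; rewrite in_setU1 IH ?orbT. Qed.

Lemma GL_Df (T : finType) (e : rel T) (G : {set {set T}}) (sigma : T -> nat) (L : seq (T * nat)) p : p \in L -> Df e G sigma p \in GL e G sigma L.
Proof.
elim: L => //= p' L IH; rewrite inE => /orP [/eqP ->|pL]; rewrite in_setU1 ?eqxx //.
by rewrite IH ?orbT.
Qed.

Lemma part2 (T : finType) (e : rel T) :
  symmetric e ->
  forall G H : {set {set T}}, saturated e G H ->
  forall sigma : T -> nat, injective sigma ->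
  forall m : nat, 1 <= m <= rk e G - 1 ->
  forall P : endo T -> Prop, in_Pm e G H sigma m P ->
  (forall G' H' : {set {set T}},
      saturated e G' H' -> (forall f, P f <-> OutGH e G' H' f) -> rk e G' = m).
Proof.
move=> esym G H satG sigma sinj m /andP [m1 mr] P [L [HsL [vL [Hdist HP]]]] G' H' satG' Hrep.
have Lne : 0 < size L by rewrite HsL; lia.
have [p0 Lp0] : exists p, p \in L.
  by case: L Lne {HsL vL Hdist HP} => [|p L] //= _; exists p; rewrite inE eqxx.
have PO : forall f, P f -> OutGH e G H f by move=> f /HP /(_ p0 Lp0) [].
have uL : uniq (map (Df e G sigma) L).
  apply/(uniqP set0) => i j; rewrite !inE size_map => iL jL.
  rewrite !(nth_map p0) // => EDf.
  case: (eqVneq i j) => // nij; exfalso; apply: (Hdist p0 i j iL jL nij) => f.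
  by rewrite /Df in EDf; rewrite EDf.
have Ha : forall x y, preceq e G' x y -> preceq e (GL e G sigma L) x y.
  move=> x y /andP [lk1 f1]; apply/andP; split => //.
  apply/forall_inP => D DGL; apply/implyP => xD.
  case: (eqVneq D setT) => [->|nT]; first by rewrite in_setT.
  have DG' : D \in G'.
    apply: satG' => // f /Hrep Pf.
    case: (memGL DGL) => [DG|[p pL ->]].
    + by have [_ [h _]] := PO f Pf; apply: h.
    + by have [_ h] := (HP f).1 Pf p pL.
  by have := forall_inP f1 D DG'; move/implyP; apply.
have Hb : forall x y, y \in cls e (GL e G sigma L) x -> preceq e G' x y.
  move=> x y; rewrite inE => /andP [xy _].
  case: (eqVneq x y) => [->|nxy]; first exact: preceq_refl.
  move: (xy) => /andP [lkxy fxy].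
  have fxyD : forall D, D \in GL e G sigma L -> x \in D -> y \in D.
    by move=> D DGL xD; have := forall_inP fxy D DGL; move/implyP; apply.
  set tau := transvection x y true.
  have Ptau : P tau.
    apply/HP => p pL; split; last by apply: (stab_tr esym nxy); apply: fxyD; exact: GL_Df.
    split; first exact: inOut0_tr.
    split.
      by move=> D DG; apply: (stab_tr esym nxy); apply: fxyD; exact: GL_G.
    move=> D DH; apply: acts_tr; apply/negP => xD.
    have xG : [set x] \in G.
      apply: satG.
        apply/eqP => E; move: (in_setT y); rewrite -E inE => /eqP Eyx.
        by rewrite Eyx eqxx in nxy.
      move=> f [_ [_ hH]]; apply: (acts_stab esym _ (hH D DH)).
      by rewrite sub1set.
    have /eqP Eyx : y == x by rewrite -in_set1; apply: (fxyD _ (GL_G e sigma L xG)); rewrite in_set1.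
    by rewrite Eyx eqxx in nxy.
  have [_ [hG _]] := (Hrep tau).1 Ptau.
  apply/andP; split => //; apply/forall_inP => D DG'; apply/implyP => xD.
  apply/negPn/negP => yD; exact: (nostab_tr nxy xD yD (hG D DG')).
have Ecls : forall v, cls e G' v = cls e (GL e G sigma L) v.
  move=> v; apply/setP => u; apply/idP/idP.
  - by rewrite !inE => /andP [h1 h2]; rewrite !Ha.
  - move=> uv; rewrite inE Hb //= Hb //; exact: cls_sym.
have Enc : nclasses e G' = nclasses e (GL e G sigma L).
  by rewrite /nclasses (eq_imset _ Ecls).
have nle : nclasses e G <= #|T| by rewrite /nclasses; apply: leq_imset_card.
rewrite /rk Enc (count_GL esym sinj vL uL) HsL.
move: mr nle; rewrite /rk; lia.
Qed.

Definition pb (Q : Prop) : bool := if excluded_middle_informative Q then true else false.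
Lemma pbP (Q : Prop) : pb Q <-> Q.
Proof. rewrite /pb; case: excluded_middle_informative => //. Qed.

Lemma part1 (T : finType) (e : rel T) (G H : {set {set T}}) sigma m (P : endo T -> Prop) :
  0 < rk e G - m -> in_Pm e G H sigma m P ->
  exists G' H' : {set {set T}},
      saturated e G' H' /\ forall f, P f <-> OutGH e G' H' f.
Proof.
move=> Hpos [L [HsL [_ [_ HP]]]].
have [p0 Lp0] : exists p, p \in L.
  by case: L HsL {HP} => [|p L] /= HsL; [rewrite -HsL in Hpos | exists p; rewrite inE eqxx].
have PO : forall f, P f -> OutGH e G H f.
  by move=> f /HP /(_ p0 Lp0) [].
exists [set D | pb (forall f, P f -> stabilises e f D)], H.
have key : forall f, P f <-> OutGH e [set D | pb (forall f, P f -> stabilises e f D)] H f.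
  move=> f; split.
  - move=> Pf; have [h1 [h2 h3]] := PO f Pf; split; first by [].
    split; last by [].
    by move=> D; rewrite inE => /pbP; apply.
  - move=> [h1 [h2 h3]]; apply/HP => p Lp.
    have D0 : forall D, (forall g, P g -> stabilises e g D) -> stabilises e f D.
      by move=> D HD; apply: h2; rewrite inE; apply/pbP.
    split; last by apply: D0 => g /HP /(_ p Lp) [].
    split; first by [].
    split; last by [].
    move=> D DG; apply: D0 => g /PO [_ [g2 _]]; exact: g2.
split; last exact: key.
move=> D _ HD; rewrite inE; apply/pbP => f /key; exact: HD.
Qed.

Theorem proposition7p4 (T : finType) (e : rel T) :
  symmetric e -> irreflexive e ->
  forall G H : {set {set T}}, saturated e G H ->
  forall sigma : T -> nat, injective sigma ->
  forall m : nat, 1 <= m <= rk e G - 1 ->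
  forall P : endo T -> Prop, in_Pm e G H sigma m P ->
  (exists G' H' : {set {set T}},
      saturated e G' H' /\ forall f, P f <-> OutGH e G' H' f) /\
  (forall G' H' : {set {set T}},
      saturated e G' H' -> (forall f, P f <-> OutGH e G' H' f) -> rk e G' = m).
Proof.
move=> esym _ G H satG sigma sinj m hm P HP; split.
  apply: part1 HP; rewrite subn_gt0; move: hm; case: (rk e G) => // n; lia.
exact: (part2 esym satG sinj hm HP).
Qed.
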